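(* Let $F$ be an algebraically closed field with $\mathrm{char}\,F\ne2$. Then the maximal Mathieu subspaces of $M_2(F)$ are exactly the following: (i) $I_2^\perp=\{b\in M_2(F):\mathrm{Tr}(b)=0\}$; (ii) the subspaces $F(\lambda_1e_1+\lambda_2e_2)+e_1M_2(F)e_2$, where $e_1,e_2$ are nonzero idempotents with $e_1+e_2=I_2$ and $\lambda_1,\lambda_2\in F$ are distinct, nonzero, with $\lambda_1+\lambda_2\ne0$; (iii) the subspaces $F(I_2+c)$ with $c\in M_2(F)$ nonzero and nilpotent.
   Context: Let $\mathcal A$ be an associative algebra over a field $F$. An $F$-subspace $M\subseteq\mathcal A$ is a Mathieu subspace (MS) of $\mathcal A$ if for all $a,b,c\in\mathcal A$ such that $a^m\in M$ for all $m\ge 1$, there exists $N$ (depending on $a,b,c$) such that $ba^mc\in M$ for all $m\ge N$. A maximal MS of $\mathcal A$ is a proper MS of $\mathcal A$ that is not properly contained in any proper MS of $\mathcal A$. *)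

(* Defs.v *)
From HB Require Import structures.
From mathcomp Require Import all_boot all_order all_algebra.
Set Implicit Arguments. Unset Strict Implicit. Unset Printing Implicit Defensive.
Import Order.TTheory GRing.Theory Num.Theory.
Local Open Scope ring_scope.

(* F-subspaces of M_{n+1}(F) are represented by {vspace 'M[F]_n.+1}
   (every subspace of a finite-dimensional space is one). *)

Definition mathieu_subspace (F : fieldType) (n : nat)
  (M : {vspace 'M[F]_n.+1}) : Prop :=
  forall a b c : 'M[F]_n.+1,
    (forall m : nat, (0 < m)%N -> a ^+ m \in M) ->
    exists N : nat, forall m : nat, (N <= m)%N -> b * a ^+ m * c \in M.

Definition maximal_mathieu_subspace (F : fieldType) (n : nat)
  (M : {vspace 'M[F]_n.+1}) : Prop :=
  [/\ M != fullv, mathieu_subspace M &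
      forall N : {vspace 'M[F]_n.+1},
        N != fullv -> mathieu_subspace N -> (M <= N)%VS -> N = M].

(* Main.v *)
Require Import Defs.
From HB Require Import structures.
From mathcomp Require Import all_boot all_order all_algebra.
From mathcomp Require Import ring.
Import GRing.Theory.
Local Open Scope ring_scope.
Section S.
Variable F : fieldType.
Definition mx2 (a b c d : F) : 'M[F]_2 :=
  \matrix_(i < 2, j < 2) if i == 0 :> nat then (if j == 0 :> nat then a else b)
                          else (if j == 0 :> nat then c else d).

Lemma ord2P (P : 'I_2 -> Prop) : P 0 -> P 1 -> forall i, P i.
Proof. by move=> P0 P1 [[|[|//]] Hi]; [ move: P0 | move: P1]; congr P; apply: val_inj. Qed.

Lemma mx2_eta (A : 'M[F]_2) : A = mx2 (A 0 0) (A 0 1) (A 1 0) (A 1 1).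
Proof. by apply/matrixP; elim/ord2P => /=; elim/ord2P; rewrite mxE. Qed.

Lemma mx2_mul a b c d a' b' c' d' :
  mx2 a b c d * mx2 a' b' c' d' = mx2 (a*a'+b*c') (a*b'+b*d') (c*a'+d*c') (c*b'+d*d').
Proof.
apply/matrixP; elim/ord2P; elim/ord2P; rewrite !mxE /= !big_ord_recr /= big_ord0 !mxE /=; ring.
Qed.
Lemma mx2_add a b c d a' b' c' d' :
  mx2 a b c d + mx2 a' b' c' d' = mx2 (a+a') (b+b') (c+c') (d+d').
Proof. by apply/matrixP; elim/ord2P; elim/ord2P; rewrite !mxE. Qed.
Lemma mx2_opp a b c d : - mx2 a b c d = mx2 (-a) (-b) (-c) (-d).
Proof. by apply/matrixP; elim/ord2P; elim/ord2P; rewrite !mxE. Qed.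
Lemma mx2_scale k a b c d : k *: mx2 a b c d = mx2 (k*a) (k*b) (k*c) (k*d).
Proof. by apply/matrixP; elim/ord2P; elim/ord2P; rewrite !mxE. Qed.
Lemma mx2_one : (1 : 'M[F]_2) = mx2 1 0 0 1.
Proof. by apply/matrixP; elim/ord2P; elim/ord2P; rewrite !mxE. Qed.
Lemma mx2_zero : (0 : 'M[F]_2) = mx2 0 0 0 0.
Proof. by apply/matrixP; elim/ord2P; elim/ord2P; rewrite !mxE. Qed.
Lemma mx2_tr a b c d : \tr (mx2 a b c d) = a + d.
Proof. by rewrite /mxtrace !big_ord_recr big_ord0 !mxE /= add0r. Qed.
Lemma mx2_eq a b c d a' b' c' d' :
  (mx2 a b c d = mx2 a' b' c' d') <-> [/\ a = a', b = b', c = c' & d = d'].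
Proof.
split=> [E|[-> -> -> ->]//].
have e i j : mx2 a b c d i j = mx2 a' b' c' d' i j by rewrite E.
by move: (e 0 0) (e 0 1) (e 1 0) (e 1 1); rewrite !mxE.
Qed.
Lemma mx2_ind (P : 'M[F]_2 -> Prop) : (forall a b c d, P (mx2 a b c d)) -> forall A, P A.
Proof. by move=> H A; rewrite (mx2_eta A). Qed.

Definition det2 (A : 'M[F]_2) := A 0 0 * A 1 1 - A 0 1 * A 1 0.
Lemma mx2_det a b c d : det2 (mx2 a b c d) = a * d - b * c.
Proof. by rewrite /det2 !mxE. Qed.

Ltac mx2s := rewrite ?(mx2_one, mx2_zero); rewrite ?(mx2_mul, mx2_add, mx2_opp, mx2_scale, mx2_tr, mx2_det).

Lemma cayley (A : 'M[F]_2) : A * A = \tr A *: A - det2 A *: 1.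
Proof. elim/mx2_ind: A => a b c d; mx2s; apply/mx2_eq; split; ring. Qed.

Lemma det2D (x y : 'M[F]_2) : det2 (x + y) = det2 x + det2 y + \tr x * \tr y - \tr (x * y).
Proof. elim/mx2_ind: x => a b c d; elim/mx2_ind: y => ? ? ? ?; mx2s; ring. Qed.

Lemma det2Z k (x : 'M[F]_2) : det2 (k *: x) = k ^+ 2 * det2 x.
Proof. elim/mx2_ind: x => a b c d; mx2s; ring. Qed.

Lemma det2M (x y : 'M[F]_2) : det2 (x * y) = det2 x * det2 y.
Proof. elim/mx2_ind: x => a b c d; elim/mx2_ind: y => ? ? ? ?; mx2s; ring. Qed.

Lemma det2_1 : det2 1 = 1.
Proof. mx2s; ring. Qed.
Lemma tr2_1 : \tr (1 : 'M[F]_2) = 2.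
Proof. mx2s; ring. Qed.

Lemma polar (x y : 'M[F]_2) :
  x * y + y * x = \tr x *: y + \tr y *: x - (\tr x * \tr y - \tr (x * y)) *: 1.
Proof. elim/mx2_ind: x => a b c d; elim/mx2_ind: y => ? ? ? ?; mx2s; apply/mx2_eq; split; ring. Qed.

Lemma trN (x : 'M[F]_2) : \tr (- x) = - \tr x.
Proof. elim/mx2_ind: x => *; mx2s; ring. Qed.
Lemma trB (x y : 'M[F]_2) : \tr (x - y) = \tr x - \tr y.
Proof. by rewrite mxtraceD trN. Qed.

Lemma trC (x y : 'M[F]_2) : \tr (x * y) = \tr (y * x).
Proof. exact: mxtrace_mulC. Qed.

Lemma sqr0 (c : 'M[F]_2) : \tr c = 0 -> det2 c = 0 -> c * c = 0.
Proof. by move=> t d; rewrite cayley t d !scale0r subr0. Qed.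

Lemma sandw (c x : 'M[F]_2) : \tr c = 0 -> det2 c = 0 -> c * x * c = \tr (x * c) *: c.
Proof.
move=> t d; have := polar c (x * c).
rewrite t mul0r scale0r add0r sub0r.
have -> : x * c * c = 0 by rewrite -mulrA sqr0 // mulr0.
have -> : \tr (c * (x * c)) = 0 by rewrite trC -mulrA sqr0 // mulr0 mxtrace0.
by rewrite oppr0 scale0r subr0 addr0 mulrA.
Qed.

Lemma sqf0 (x : F) : x * x = 0 -> x = 0.
Proof. by move/eqP; rewrite mulf_eq0 orbb => /eqP. Qed.

Lemma L2 (c k : 'M[F]_2) : c != 0 -> \tr c = 0 -> det2 c = 0 ->
  \tr k = 0 -> det2 k = 0 -> \tr (c * k) = 0 -> exists s, k = s *: c.
Proof.
elim/mx2_ind: c => p q r d; elim/mx2_ind: k => u v w d'.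
rewrite !mx2_tr mx2_mul mx2_tr !mx2_det => nz t1.
have hd : d = - p by apply/eqP; rewrite -subr_eq0 opprK addrC t1.
subst d => D1 t2; have hd : d' = - u by apply/eqP; rewrite -subr_eq0 opprK addrC t2.
subst d' => D2 T.
have [q0|qn0] := eqVneq q 0.
  have p0 : p = 0.
    by apply: sqf0; apply/eqP; rewrite -oppr_eq0 -mulrN; move: D1; rewrite q0 mul0r subr0 => ->.
  have rn0 : r != 0 by apply: contraNneq nz => r0; rewrite p0 q0 r0 oppr0 mx2_zero.
  have v0 : v = 0.
    by move: T; rewrite p0 q0 !mul0r !add0r oppr0 mul0r addr0 => /eqP; rewrite mulf_eq0 (negbTE rn0) => /eqP.
  have u0 : u = 0.
    by apply: sqf0; apply/eqP; rewrite -oppr_eq0 -mulrN; move: D2; rewrite v0 mul0r subr0 => ->.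
  exists (w / r); rewrite mx2_scale p0 q0 u0 v0; apply/mx2_eq; split; try field; done.
have E : (p * v - q * u) ^+ 2 = 0.
  have -> : (p * v - q * u) ^+ 2 = v ^+ 2 * (- (p * - p - q * r)) + q ^+ 2 * (- (u * - u - v * w))
      - q * v * (p * u + q * w + (r * v + - p * - u)) by ring.
  by rewrite D1 D2 T; ring.
have hu : u = p * v / q.
  move/eqP: E; rewrite expf_eq0 /= subr_eq0 => /eqP ->; field; done.
have hr : r = - p ^+ 2 / q.
  have e : q * r = - p ^+ 2 by apply/eqP; rewrite -subr_eq0; apply/eqP; rewrite -oppr0 -D1; ring.
  by rewrite -e; field.
have hw : w = r * v / q.
  have e : q * w = - (p * u + r * v + - p * - u).
    by apply/eqP; rewrite -subr_eq0; apply/eqP; rewrite -T; ring.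
  have -> : w = q * w / q by field.
  rewrite e hu hr; field; done.
exists (v / q); rewrite mx2_scale hw hu; apply/mx2_eq; split; field; done.
Qed.

Lemma delta2 (j k : 'I_2) : delta_mx j k =
  mx2 ((j == 0) && (k == 0))%:R ((j == 0) && (k == 1))%:R ((j == 1) && (k == 0))%:R ((j == 1) && (k == 1))%:R.
Proof. by elim/ord2P: j; elim/ord2P: k; apply/matrixP; elim/ord2P; elim/ord2P; rewrite !mxE. Qed.

Lemma dsand (A B : 'M[F]_2) i j k l : (A * delta_mx j k * B) i l = A i j * B k l.
Proof.
rewrite delta2 [A]mx2_eta [B]mx2_eta.
elim/ord2P: i; elim/ord2P: j; elim/ord2P: k; elim/ord2P: l; mx2s; rewrite !mxE /=; ring.
Qed.

Lemma dsand2 (A : 'M[F]_2) i j k l p q :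
  (delta_mx k i * A * delta_mx j l) p q = ((p == k) && (q == l))%:R * A i j.
Proof.
rewrite !delta2 [A]mx2_eta.
elim/ord2P: i; elim/ord2P: j; elim/ord2P: k; elim/ord2P: l; elim/ord2P: p; elim/ord2P: q;
  mx2s; rewrite !mxE /=; ring.
Qed.

Lemma mx_neq0 (A : 'M[F]_2) : A != 0 -> exists i j, A i j != 0.
Proof.
move=> nz; case: (boolP [exists i, exists j, A i j != 0]) => [/existsP[i /existsP[j H]]|H].
  by exists i, j.
exfalso; move/negP: nz; apply; apply/eqP/matrixP => i j; rewrite mxE.
move: H; rewrite negb_exists => /forallP/(_ i); rewrite negb_exists => /forallP/(_ j).
by move/negPn/eqP.
Qed.

Definition IF (M : {vspace 'M[F]_2}) := forall e, e \in M -> e * e = e -> e = 0.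

Lemma sc_mul k l (u v : 'M[F]_2) : (k *: u) * (l *: v) = (k * l) *: (u * v).
Proof. by rewrite -scalerAl -scalerAr scalerA. Qed.

Lemma scal_inj {v : 'M[F]_2} {a b} : v != 0 -> a *: v = b *: v -> a = b.
Proof.
move=> nz /eqP; rewrite -subr_eq0 -scalerBl scaler_eq0 (negbTE nz) orbF subr_eq0.
by move/eqP.
Qed.

Lemma one_neq0 : (1 : 'M[F]_2) != 0.
Proof. exact: oner_neq0. Qed.

Lemma trE1 (e : 'M[F]_2) : e * e = e -> e != 0 -> e != 1 -> \tr e = 1.
Proof.
move=> idem nz n1; apply/eqP; apply/negPn/negP => ht.
have H : (\tr e - 1) *: e = det2 e *: 1.
  have E := cayley e; rewrite idem in E.
  by rewrite scalerBl scale1r {3}E opprB addrC subrK.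
have ht' : \tr e - 1 != 0 by rewrite subr_eq0.
set mu := (\tr e - 1)^-1 * det2 e.
have he : e = mu *: 1.
  by rewrite /mu -scalerA -H scalerA mulVf // scale1r.
have : (mu *: 1) * (mu *: (1 : 'M[F]_2)) = mu *: 1 by rewrite -he idem.
rewrite sc_mul mulr1.
move/(scal_inj one_neq0) => mm.
have : mu * (mu - 1) = 0 by rewrite mulrBr mm mulr1 subrr.
move/eqP; rewrite mulf_eq0 subr_eq0 => /orP[] /eqP m.
  by move/eqP: nz; apply; rewrite he m scale0r.
by move/eqP: n1; apply; rewrite he m scale1r.
Qed.

Lemma IF_tr0 (M : {vspace 'M[F]_2}) : (2%:R : F) != 0 ->
  (forall b, b \in M -> \tr b = 0) -> IF M.
Proof.
move=> two H e eM idem; have E := cayley e.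
rewrite idem (H _ eM) scale0r sub0r in E.
have := H _ eM; rewrite E trN mxtraceZ tr2_1 => /eqP; rewrite oppr_eq0 mulf_eq0 (negbTE two) orbF.
by move/eqP=> d0; rewrite d0 scale0r oppr0.
Qed.

Lemma IF_proper (M : {vspace 'M[F]_2}) : IF M -> M != fullv.
Proof.
move=> H; apply/negP => /eqP Mf; have := H 1; rewrite Mf memvf mul1r => /(_ isT erefl) /eqP.
by rewrite (negbTE one_neq0).
Qed.

Lemma nonsing (M : {vspace 'M[F]_2}) y : IF M -> y \in M -> \tr y != 0 -> det2 y != 0.
Proof.
move=> H yM ty; apply/negP => /eqP d0.
set e := (\tr y)^-1 *: y.
have eM : e \in M by rewrite memvZ.
have : e * e = e.
  rewrite /e sc_mul cayley d0 scale0r subr0 scalerA; congr (_ *: _).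
  by rewrite -mulrA mulVf // mulr1.
move/(H _ eM) => e0.
have : y = \tr y *: e by rewrite /e scalerA mulfV // scale1r.
by rewrite e0 scaler0 => y0; move: ty; rewrite y0 mxtrace0 eqxx.
Qed.

Lemma not_scalar (M : {vspace 'M[F]_2}) x mu : IF M -> x \in M -> \tr x != 0 -> x != mu *: 1.
Proof.
move=> H xM tx; apply/negP => /eqP xe.
have mu0 : mu != 0 by apply: contraNneq tx => m0; rewrite xe m0 scale0r mxtrace0.
have : (1 : 'M[F]_2) \in M by have := memvZ mu^-1 xM; rewrite xe scalerA mulVf // scale1r.
move/H => /(_ (mulr1 _)) /eqP; by rewrite (negbTE one_neq0).
Qed.

Lemma ann (c z : 'M[F]_2) : c != 0 -> \tr c = 0 -> det2 c = 0 -> c * z = 0 -> z * c = 0 ->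
  exists s, z = s *: c.
Proof.
move=> nz tc dc cz zc.
have tz : \tr z = 0.
  have := polar z c; rewrite zc cz tc mxtrace0 mulr0 subr0 scale0r addr0 scale0r subr0.
  by rewrite !addr0 => /esym /eqP; rewrite scaler_eq0 (negbTE nz) orbF => /eqP.
have dz : det2 z = 0.
  have E := cayley z; rewrite tz scale0r sub0r in E.
  have : z * z * c = 0 by rewrite -mulrA zc mulr0.
  rewrite E mulNr -scalerAl mul1r => /eqP; rewrite oppr_eq0 scaler_eq0 (negbTE nz) orbF.
  by move/eqP.
by apply: L2 => //; rewrite cz mxtrace0.
Qed.

Lemma IF_ii (e1 e2 y : 'M[F]_2) (l1 l2 t : F) : e1 * e1 = e1 -> e2 * e2 = e2 -> e1 * e2 = 0 -> e2 * e1 = 0 ->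
  e1 != 0 -> e2 != 0 -> l1 != l2 -> l1 != 0 -> l2 != 0 ->
  let z := t *: (l1 *: e1 + l2 *: e2) + e1 * y * e2 in z * z = z -> z = 0.
Proof.
move=> i1 i2 o12 o21 n1 n2 l12 nl1 nl2 z zz.
have ze1 : z * e1 = (t * l1) *: e1.
  rewrite /z !mulrDl -!scalerAl mulrDl -!scalerAl i1 o21 scaler0 addr0 -(mulrA _ e2) o21 mulr0.
  by rewrite addr0 scalerA.
have e2z : e2 * z = (t * l2) *: e2.
  rewrite /z !mulrDr -!scalerAr mulrDr -!scalerAr i2 o21 scaler0 add0r !mulrA o21 !mul0r.
  by rewrite addr0 scalerA.
have k1 : (t * l1) * (t * l1) = t * l1.
  have : z * (z * e1) = z * e1 by rewrite mulrA zz.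
  by rewrite ze1 -scalerAr ze1 scalerA => /(scal_inj n1).
have k2 : (t * l2) * (t * l2) = t * l2.
  have : e2 * z * z = e2 * z by rewrite -mulrA zz.
  by rewrite e2z -scalerAl e2z scalerA => /(scal_inj n2).
have [t0|tn0] := eqVneq t 0.
  move: zz; rewrite /z t0 scale0r add0r => <-.
  by rewrite -!mulrA (mulrA e2) o21 mul0r !mulr0.
have one (a : F) : a != 0 -> a * a = a -> a = 1.
  by move=> an0 aa; apply: (mulfI an0); rewrite aa mulr1.
have h1 := one _ (mulf_neq0 tn0 nl1) k1.
have h2 := one _ (mulf_neq0 tn0 nl2) k2.
by move/eqP: l12; case; apply: (mulfI tn0); rewrite h1 h2.
Qed.

Section Idem.
Variables (x : 'M[F]_2) (a d : F).
Lemma P1 : (x - d *: 1) * (x - d *: 1) = (a - d) *: (x - d *: 1) + (x - a *: 1) * (x - d *: 1).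
Proof. elim/mx2_ind: x => *; mx2s; apply/mx2_eq; split; ring. Qed.
Lemma P2 : (a *: 1 - x) * (a *: 1 - x) = (a - d) *: (a *: 1 - x) + (x - a *: 1) * (x - d *: 1).
Proof. elim/mx2_ind: x => *; mx2s; apply/mx2_eq; split; ring. Qed.
Lemma P3 : (x - d *: 1) * (a *: 1 - x) = - ((x - a *: 1) * (x - d *: 1)).
Proof. elim/mx2_ind: x => *; mx2s; apply/mx2_eq; split; ring. Qed.
Lemma P4 : (a *: 1 - x) * (x - d *: 1) = - ((x - a *: 1) * (x - d *: 1)).
Proof. elim/mx2_ind: x => *; mx2s; apply/mx2_eq; split; ring. Qed.
Lemma P5 : x * (x - d *: 1) = a *: (x - d *: 1) + (x - a *: 1) * (x - d *: 1).
Proof. elim/mx2_ind: x => *; mx2s; apply/mx2_eq; split; ring. Qed.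
Lemma P6 : (a *: 1 - x) * x = d *: (a *: 1 - x) - (x - a *: 1) * (x - d *: 1).
Proof. elim/mx2_ind: x => *; mx2s; apply/mx2_eq; split; ring. Qed.
Lemma P7 : a *: (x - d *: 1) + d *: (a *: 1 - x) = (a - d) *: x.
Proof. elim/mx2_ind: x => *; mx2s; apply/mx2_eq; split; ring. Qed.
Lemma P8 : (x - a *: 1) * (x - d *: 1) = x * x - (a + d) *: x + (a * d) *: 1.
Proof. elim/mx2_ind: x => *; mx2s; apply/mx2_eq; split; ring. Qed.
Lemma P9 : (x - d *: 1) + (a *: 1 - x) = (a - d) *: 1.
Proof. elim/mx2_ind: x => *; mx2s; apply/mx2_eq; split; ring. Qed.

Hypotheses (ad : a != d) (Q : (x - a *: 1) * (x - d *: 1) = 0).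
Definition e1 := (a - d)^-1 *: (x - d *: 1).
Definition e2 := (a - d)^-1 *: (a *: 1 - x).
Let ad0 : a - d != 0. Proof. by rewrite subr_eq0. Qed.

Lemma e1_idem : e1 * e1 = e1.
Proof.
rewrite /e1 sc_mul P1 Q addr0 scalerA; congr (_ *: _).
by rewrite -mulrA mulVf // mulr1.
Qed.
Lemma e2_idem : e2 * e2 = e2.
Proof.
rewrite /e2 sc_mul P2 Q addr0 scalerA; congr (_ *: _).
by rewrite -mulrA mulVf // mulr1.
Qed.
Lemma e12 : e1 * e2 = 0.
Proof. by rewrite /e1 /e2 sc_mul P3 Q oppr0 scaler0. Qed.
Lemma e21 : e2 * e1 = 0.
Proof. by rewrite /e1 /e2 sc_mul P4 Q oppr0 scaler0. Qed.
Lemma e1e2 : e1 + e2 = 1.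
Proof. by rewrite /e1 /e2 -scalerDr P9 scalerA mulVf // scale1r. Qed.
Lemma x_e : a *: e1 + d *: e2 = x.
Proof. by rewrite /e1 /e2 !scalerA mulrC (mulrC d) -!scalerA -scalerDr P7 scalerA mulVf // scale1r. Qed.
Lemma xe1 : x * e1 = a *: e1.
Proof. by rewrite /e1 -scalerAr P5 Q addr0 !scalerA mulrC. Qed.
Lemma e2x : e2 * x = d *: e2.
Proof. by rewrite /e2 -scalerAl P6 Q subr0 !scalerA mulrC. Qed.
End Idem.

Lemma expr_idem (e : 'M[F]_2) m : e * e = e -> e ^+ m.+1 = e.
Proof. by move=> ee; elim: m => [|m IH]; rewrite ?expr1 // exprS IH ee. Qed.

Lemma det2X (c : 'M[F]_2) k : det2 (c ^+ k) = det2 c ^+ k.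
Proof. by elim: k => [|k IH]; rewrite ?expr0 ?det2_1 // !exprS det2M IH. Qed.

Lemma nilp (c : 'M[F]_2) k : c != 0 -> c ^+ k = 0 -> \tr c = 0 /\ det2 c = 0.
Proof.
move=> nz ck.
have dc : det2 c = 0.
  have := det2X c k; rewrite ck mx2_zero mx2_det mulr0 subr0 => /esym /eqP.
  by rewrite expf_eq0 => /andP[_ /eqP].
split=> //.
have E : forall m, c ^+ m.+1 = \tr c ^+ m *: c.
  elim=> [|m IH]; first by rewrite expr1 expr0 scale1r.
  by rewrite exprS IH -scalerAr cayley dc scale0r subr0 scalerA exprS mulrC.
case: k ck => [|[|m]]; first by rewrite expr0 => /eqP; rewrite (negbTE one_neq0).
  by rewrite expr1 => /eqP; rewrite (negbTE nz).
rewrite E => /eqP; rewrite scaler_eq0 (negbTE nz) orbF expf_eq0 => /andP[_ /eqP //].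
Qed.

Lemma IF_MS (M : {vspace 'M[F]_2}) : M != fullv -> mathieu_subspace M -> IF M.
Proof.
move=> Mf MS e eM ee; apply/eqP; apply/negPn/negP => nz; move/negP: Mf; apply.
have pw : forall m, (0 < m)%N -> e ^+ m \in M by move=> [|m] // _; rewrite expr_idem.
have bec : forall b c, b * e * c \in M.
  move=> b c; have [N HN] := MS e b c pw.
  by have := HN N.+1 (leqnSn N); rewrite expr_idem.
have [i [j nij]] := mx_neq0 _ nz.
have D : forall k l, delta_mx k l \in M.
  move=> k l; have := memvZ (e i j)^-1 (bec (delta_mx k i) (delta_mx j l)).
  suff -> : (e i j)^-1 *: (delta_mx k i * e * delta_mx j l) = delta_mx k l by [].
  apply/matrixP => p q; rewrite mxE dsand2 !mxE.
  case: (p == k); case: (q == l); rewrite /= ?(mulr0, mul0r, mulr1, mul1r) ?mulVf //.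
apply/eqP; apply: subv_anti; rewrite subvf /=; apply/subvP => y _.
rewrite [y]matrix_sum_delta; apply: memv_suml => p _; apply: memv_suml => q _.
by rewrite memvZ.
Qed.

Lemma MS_IF (M : {vspace 'M[F]_2}) : IF M -> mathieu_subspace M.
Proof.
move=> H a b c pw.
have a1 : a \in M by have := pw 1%N isT; rewrite expr1.
have a2 : a * a \in M by have := pw 2%N isT; rewrite expr2.
have [aa0|aan0] := eqVneq (a * a) 0.
  exists 2%N => m m2; rewrite -(subnK m2) exprD expr2 aa0 !mulr0 mul0r.
  exact: mem0v.
exfalso.
have [d0|dn0] := eqVneq (det2 a) 0.
  have [t0|tn0] := eqVneq (\tr a) 0.
    by move/eqP: aan0; apply; rewrite cayley t0 d0 !scale0r subr0.
  have := @nonsing M a H a1 tn0; by rewrite d0 eqxx.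
have : (1 : 'M[F]_2) \in M.
  have -> : (1 : 'M[F]_2) = (det2 a)^-1 *: (\tr a *: a - a * a).
    by rewrite cayley opprB addrC subrK scalerA mulVf // scale1r.
  by rewrite memvZ // memvB // memvZ.
by move/H => /(_ (mulr1 _)) /eqP; rewrite (negbTE one_neq0).
Qed.

Lemma nz_sand (f g : 'M[F]_2) : f != 0 -> g != 0 -> exists w, f * w * g != 0.
Proof.
move=> nf ng; have [i [j hij]] := mx_neq0 _ nf; have [k [l hkl]] := mx_neq0 _ ng.
exists (delta_mx j k); apply/negP => /eqP E.
have := dsand f g i j k l; rewrite E mxE => /esym /eqP.
by rewrite mulf_eq0 (negbTE hij) (negbTE hkl).
Qed.
End S.
Arguments mx2 {F}.
Arguments mx2_eta {F}.
Arguments mx2_mul {F}.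
Arguments mx2_add {F}.
Arguments mx2_opp {F}.
Arguments mx2_scale {F}.
Arguments mx2_one {F}.
Arguments mx2_zero {F}.
Arguments mx2_tr {F}.
Arguments mx2_eq {F}.
Arguments mx2_ind {F}.
Arguments det2 {F}.
Arguments mx2_det {F}.
Arguments cayley {F}.
Arguments det2D {F}.
Arguments det2Z {F}.
Arguments det2M {F}.
Arguments det2_1 {F}.
Arguments tr2_1 {F}.
Arguments polar {F}.
Arguments trN {F}.
Arguments trB {F}.
Arguments trC {F}.
Arguments sqr0 {F}.
Arguments sandw {F}.
Arguments sqf0 {F}.
Arguments L2 {F}.
Arguments delta2 {F}.
Arguments dsand {F}.
Arguments dsand2 {F}.
Arguments mx_neq0 {F}.
Arguments IF {F}.
Arguments sc_mul {F}.
Arguments scal_inj {F}.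
Arguments one_neq0 {F}.
Arguments trE1 {F}.
Arguments IF_tr0 {F}.
Arguments IF_proper {F}.
Arguments nonsing {F}.
Arguments not_scalar {F}.
Arguments ann {F}.
Arguments IF_ii {F}.
Arguments P1 {F}.
Arguments P2 {F}.
Arguments P3 {F}.
Arguments P4 {F}.
Arguments P5 {F}.
Arguments P6 {F}.
Arguments P7 {F}.
Arguments P8 {F}.
Arguments P9 {F}.
Arguments e1 {F}.
Arguments e2 {F}.
Arguments e1_idem {F}.
Arguments e2_idem {F}.
Arguments e12 {F}.
Arguments e21 {F}.
Arguments e1e2 {F}.
Arguments x_e {F}.
Arguments xe1 {F}.
Arguments e2x {F}.
Arguments expr_idem {F}.
Arguments det2X {F}.
Arguments nilp {F}.
Arguments IF_MS {F}.
Arguments MS_IF {F}.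
Arguments nz_sand {F}.
Section C.
Variable F : closedFieldType.
Implicit Types M N : {vspace 'M[F]_2}.

Lemma root2 (p q : F) : exists a, a * a = p * a + q.
Proof.
have [a Ha] := @solve_monicpoly F 2 (fun i => if i == 0%N then q else p) isT.
exists a; move: Ha; rewrite !big_ord_recr big_ord0 /= expr2 expr1 expr0 => ->.
by rewrite add0r mulr1 addrC.
Qed.

Lemma charroot (x : 'M[F]_2) : exists a d, [/\ a + d = \tr x, a * d = det2 x &
   (x - a *: 1) * (x - d *: 1) = 0].
Proof.
have [a Ha] := root2 (\tr x) (- det2 x).
exists a, (\tr x - a).
have sd : a + (\tr x - a) = \tr x by rewrite addrC subrK.
have pd : a * (\tr x - a) = det2 x by rewrite mulrBr Ha; ring.
by split => //; rewrite P8 sd pd cayley addrAC subrK subrr.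
Qed.

Lemma L1 {M x k} : IF M -> x \in M -> \tr x != 0 -> k \in M -> \tr k = 0 ->
  det2 k = 0 /\ \tr (x * k) = 0.
Proof.
move=> H xM tx kM tk.
have E t : det2 (x + t *: k) = det2 x - t * \tr (x * k) + t ^+ 2 * det2 k.
  by rewrite det2D det2Z mxtraceZ tk -scalerAr mxtraceZ; ring.
have nz t : det2 (x + t *: k) != 0.
  apply: (@nonsing _ M) => //; first by rewrite memvD // memvZ.
  by rewrite mxtraceD mxtraceZ tk mulr0 addr0.
have dk : det2 k = 0.
  apply/eqP/negPn/negP => dk.
  have [a Ha] := root2 (\tr (x * k) / det2 k) (- det2 x / det2 k).
  move/negP: (nz a); apply; rewrite E expr2 Ha; apply/eqP; field; done.
split => //; apply/eqP/negPn/negP => T.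
move/negP: (nz (det2 x / \tr (x * k))); apply; rewrite E dk mulr0 addr0; apply/eqP; field; done.
Qed.

Lemma span2 {N x c} : IF N -> x \in N -> \tr x != 0 -> c \in N -> \tr c = 0 -> c != 0 ->
  forall y, y \in N -> exists t s, y = t *: x + s *: c.
Proof.
move=> H xN tx cN tc nc y yN.
set k := y - (\tr y / \tr x) *: x.
have kN : k \in N by rewrite memvB // memvZ.
have tk : \tr k = 0 by rewrite trB mxtraceZ divfK // subrr.
have [dk _] := L1 H xN tx kN tk.
have [dc _] := L1 H xN tx cN tc.
have ckN : c + k \in N by rewrite memvD.
have [dck _] := L1 H xN tx ckN (etrans (mxtraceD _ _) (etrans (congr2 _ tc tk) (addr0 0))).
have tck : \tr (c * k) = 0.
  by move: dck; rewrite det2D dc dk tc mul0r !add0r => /eqP; rewrite oppr_eq0 => /eqP.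
have [s ks] := L2 c k nc tc dc tk dk tck.
by exists (\tr y / \tr x), s; rewrite -ks /k addrC subrK.
Qed.

Lemma cx_of (x c : 'M[F]_2) : \tr c = 0 -> \tr (x * c) = 0 -> c * x = \tr x *: c - x * c.
Proof.
move=> tc txc; have E := polar x c.
rewrite tc txc scale0r addr0 mulr0 subr0 scale0r subr0 in E.
by rewrite -E (addrC (x * c)) addrK.
Qed.

Lemma eig2 (x c : 'M[F]_2) : c != 0 -> \tr c = 0 -> det2 c = 0 -> \tr (x * c) = 0 ->
  exists a d, [/\ a + d = \tr x, a * d = det2 x, x * c = a *: c & c * x = d *: c].
Proof.
move=> nc tc dc txc.
have [a0 [d0 [sd ad Q]]] := charroot x.
have cy : c * (x * c - d0 *: c) = 0.
  by rewrite mulrBr mulrA sandw // txc scale0r -scalerAr sqr0 // scaler0 subrr.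
have yc : (x * c - d0 *: c) * c = 0.
  by rewrite mulrBl -mulrA sqr0 // mulr0 -scalerAl sqr0 // scaler0 subrr.
have [s Hs] := ann _ _ nc tc dc cy yc.
have xc : x * c = (s + d0) *: c by rewrite scalerDl -Hs subrK.
have : (s * (s + d0 - a0)) *: c = 0.
  have : (x - a0 *: 1) * (x - d0 *: 1) * c = 0 by rewrite Q mul0r.
  rewrite -mulrA [(x - d0 *: 1) * c]mulrBl -scalerAl mul1r Hs.
  by rewrite -scalerAr mulrBl -scalerAl mul1r xc -scalerBl scalerA.
move/eqP; rewrite scaler_eq0 (negbTE nc) orbF mulf_eq0 => /orP[/eqP s0|/eqP s1].
  exists d0, a0; split; [by rewrite addrC | by rewrite mulrC | by rewrite xc s0 add0r | ].
  by rewrite cx_of // xc s0 add0r -scalerBl -sd addrK.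
have e : s + d0 = a0 by apply/eqP; rewrite -subr_eq0 s1.
exists a0, d0; split => //; first by rewrite xc e.
by rewrite cx_of // xc e -scalerBl -sd (addrC a0) addrK.
Qed.

Lemma e_nz {M x a d} : IF M -> x \in M -> \tr x != 0 -> a != d ->
  e1 x a d != 0 /\ e2 x a d != 0.
Proof.
move=> H xM tx ad; have ad0 : (a - d)^-1 != 0 by rewrite invr_eq0 subr_eq0.
split; rewrite /e1 /e2 scaler_eq0 (negbTE ad0) /= subr_eq0.
  exact: (not_scalar _ _ _ H xM tx).
rewrite eq_sym; exact: (not_scalar _ _ _ H xM tx).
Qed.

End C.
Arguments root2 {F}. Arguments charroot {F}. Arguments cx_of {F}. Arguments eig2 {F}.
Arguments L1 {F M x k}. Arguments span2 {F N x c}. Arguments e_nz {F M x a d}.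
Section SL.
Variable F : fieldType.
Definition trf : 'M[F]_2 -> F^o := fun A => \tr A.
Lemma trf_lin : linear trf.
Proof. move=> k x y; rewrite /trf mxtraceD mxtraceZ. by []. Qed.
HB.instance Definition _ := GRing.isLinear.Build F 'M[F]_2 F^o _ trf trf_lin.
Definition sl2 : {vspace 'M[F]_2} := lker (linfun trf).
Lemma sl2E b : (b \in sl2) = (\tr b == 0).
Proof. by rewrite memv_ker lfunE. Qed.
End SL.

Section T.
Variable F : closedFieldType.
Implicit Types M N : {vspace 'M[F]_2}.

Lemma two (hF : (2 \notin [pchar F])%N) : (2%:R : F) != 0.
Proof. by move: hF; rewrite inE /=. Qed.

Lemma maxE M : maximal_mathieu_subspace M <-> IF M /\ (forall N, IF N -> (M <= N)%VS -> N = M).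
Proof.
split.
  case=> Mf MS Hmax; split; first exact: IF_MS.
  move=> N HN MN; apply: Hmax => //; [exact: IF_proper | exact: MS_IF].
case=> H Hmax; split; [exact: IF_proper | exact: MS_IF | ].
move=> N Nf MSN MN; apply: Hmax => //; exact: IF_MS.
Qed.

Lemma not_one M : IF M -> (1 : 'M[F]_2) \in M -> False.
Proof. by move=> H /H /(_ (mulr1 _)) /eqP; rewrite (negbTE one_neq0). Qed.

Lemma fwd (tw : (2%:R : F) != 0) M : IF M -> (forall N, IF N -> (M <= N)%VS -> N = M) ->
  [\/ (forall b : 'M[F]_2, b \in M = (\tr b == 0)),
      (exists (e1 e2 : 'M[F]_2) (l1 l2 : F),
         [/\ e1 != 0, e2 != 0, e1 * e1 = e1, e2 * e2 = e2 & e1 + e2 = 1] /\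
         [/\ l1 != l2, l1 != 0, l2 != 0 & l1 + l2 != 0] /\
         (forall b : 'M[F]_2, b \in M <->
            exists (t : F) (x : 'M[F]_2),
              b = t *: (l1 *: e1 + l2 *: e2) + e1 * x * e2))
    | (exists c : 'M[F]_2,
         [/\ c != 0, (exists k : nat, c ^+ k = 0) &
             (forall b : 'M[F]_2, b \in M <-> exists t : F, b = t *: (1 + c))])].
Proof.
move=> H Hmax.
have [Msl|/subvPn [x xM]] := boolP (M <= sl2 F)%VS.
  apply: Or31 => b.
  have IFs : IF (sl2 F) by apply: IF_tr0 => // b' ; rewrite sl2E => /eqP.
  by rewrite -(Hmax _ IFs Msl) sl2E.
rewrite sl2E => tx.
have dx := nonsing _ _ H xM tx.
have [cap0|/subvPn [c]] := boolP (M :&: sl2 F <= 0)%VS.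
  have K c : c \in M -> \tr c = 0 -> c = 0.
    move=> cM tc; apply/eqP; rewrite -memv0; apply: (subvP cap0).
    by rewrite memv_cap cM sl2E tc eqxx.
  have Mx b : b \in M -> b = (\tr b / \tr x) *: x.
    move=> bM; apply/eqP; rewrite -subr_eq0; apply/eqP; apply: K.
      by rewrite memvB // memvZ.
    by rewrite trB mxtraceZ divfK // subrr.
  have [a [d [sad pad Q]]] := charroot x.
  have [a0 d0] : a != 0 /\ d != 0.
    by move: dx; rewrite -pad mulf_eq0 negb_or => /andP[].
  have [ead|ad] := eqVneq a d.
    subst d.
    set c := a^-1 *: (x - a *: 1).
    have xc : x = a *: (1 + c).
      by rewrite /c scalerDr scalerA mulfV // scale1r addrC subrK.
    apply: Or33; exists c; split.
    - rewrite /c scaler_eq0 invr_eq0 (negbTE a0) /= subr_eq0.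
      exact: (not_scalar _ _ _ H xM tx).
    - by exists 2%N; rewrite expr2 /c sc_mul Q scaler0.
    move=> b; split.
      move=> bM; exists (\tr b / \tr x * a); rewrite -scalerA -xc; exact: Mx.
    case=> t ->; have -> : t *: (1 + c) = (t / a) *: x by rewrite xc scalerA divfK.
    by rewrite memvZ.
  exfalso.
  have [nf1 nf2] := e_nz H xM tx ad.
  have [w nc] := nz_sand _ _ nf1 nf2.
  set c := e1 x a d * w * e2 x a d.
  have tc : \tr c = 0.
    by rewrite /c trC mulrA (e21 _ _ _ Q) mul0r mxtrace0.
  have IFN : IF (M + <[c]>)%VS.
    move=> z /memv_addP [m mM [u /vlineP [s ->] ->]].
    rewrite (Mx m mM).
    have -> : (\tr m / \tr x) *: x = (\tr m / \tr x) *: (a *: e1 x a d + d *: e2 x a d).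
      by rewrite (x_e _ _ _ ad).
    have -> : s *: c = e1 x a d * (s *: w) * e2 x a d by rewrite /c scalerAl scalerAr.
    apply: IF_ii; [exact: e1_idem | exact: e2_idem | exact: e12 | exact: e21 | by [] | by []
      | by [] | by [] | by []].
  have := Hmax _ IFN (addvSl _ _) => E.
  have : c \in M by rewrite -E -{1}[c]add0r; apply: memv_add; [exact: mem0v | exact: memv_line].
  by move/K => /(_ tc) c0; move/eqP: nc; apply; rewrite -/c c0.
rewrite memv_cap memv0 sl2E => /andP [cM /eqP tc] nc.
have [dc txc] := L1 H xM tx cM tc.
have [a [d [sad pad xc cx]]] := eig2 x c nc tc dc txc.
have ad : a != d.
  apply/negP => /eqP ead; subst d.
  have n1 : (x - a *: 1) * c = 0 by rewrite mulrBl -scalerAl mul1r xc subrr.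
  have n2 : c * (x - a *: 1) = 0 by rewrite mulrBr -scalerAr mulr1 cx subrr.
  have [s Hs] := ann _ _ nc tc dc n2 n1.
  have xs : x - s *: c \in M by rewrite memvB // memvZ.
  have txs : \tr (x - s *: c) != 0 by rewrite trB mxtraceZ tc mulr0 subr0.
  have := not_scalar _ _ a H xs txs; rewrite -Hs opprB addrC subrK.
  by rewrite eqxx.
have Q : (x - a *: 1) * (x - d *: 1) = 0.
  by rewrite P8 sad pad cayley addrAC subrK subrr.
have [a0 d0] : a != 0 /\ d != 0.
  by move: dx; rewrite -pad mulf_eq0 negb_or => /andP[].
have [nf1 nf2] := e_nz H xM tx ad.
have ad0 : a - d != 0 by rewrite subr_eq0.
have e1c : e1 x a d * c = c.
  by rewrite /e1 -scalerAl mulrBl -scalerAl mul1r xc -scalerBl scalerA mulVf // scale1r.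
have ce2 : c * e2 x a d = c.
  by rewrite /e2 -scalerAr mulrBr -scalerAr mulr1 cx -scalerBl scalerA mulVf // scale1r.
have e2c : e2 x a d * c = 0.
  by rewrite /e2 -scalerAl mulrBl -scalerAl mul1r xc subrr scaler0.
have ce1 : c * e1 x a d = 0.
  by rewrite /e1 -scalerAr mulrBr -scalerAr mulr1 cx subrr scaler0.
apply: Or32; exists (e1 x a d), (e2 x a d), a, d; split.
  split => //; [exact: e1_idem | exact: e2_idem | exact: e1e2].
split; first by split => //; rewrite sad.
rewrite (x_e _ _ _ ad) => b; split.
  move=> bM; have [t [s ->]] := span2 H xM tx cM tc nc b bM.
  by exists t, (s *: c); rewrite -[e1 x a d * (s *: c)]scalerAr -[s *: (e1 x a d * c) * e2 x a d]scalerAl e1c ce2.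
case=> t [y ->]; rewrite memvD // ?memvZ //.
have h1 : c * (e1 x a d * y * e2 x a d) = 0 by rewrite !mulrA ce1 !mul0r.
have h2 : e1 x a d * y * e2 x a d * c = 0 by rewrite -mulrA e2c mulr0.
have [s ->] := ann c (e1 x a d * y * e2 x a d) nc tc dc h1 h2.
by rewrite memvZ.
Qed.

Lemma bwd1 (tw : (2%:R : F) != 0) M : (forall b : 'M[F]_2, b \in M = (\tr b == 0)) ->
  IF M /\ (forall N, IF N -> (M <= N)%VS -> N = M).
Proof.
move=> Hi; split; first by apply: IF_tr0 => // b; rewrite Hi => /eqP.
move=> N HN MN; apply: subv_anti; rewrite MN andbT; apply/subvP => y yN.
rewrite Hi; apply/negPn/negP => ty.
set k := 1 - (2%:R / \tr y) *: y.
have kM : k \in M by rewrite Hi /k trB mxtraceZ tr2_1 divfK // subrr.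
apply: (not_one _ HN).
have -> : (1 : 'M[F]_2) = k + (2%:R / \tr y) *: y by rewrite /k subrK.
by rewrite memvD // ?memvZ // (subvP MN).
Qed.

Lemma bwd2 M (e1 e2 : 'M[F]_2) (l1 l2 : F) :
  [/\ e1 != 0, e2 != 0, e1 * e1 = e1, e2 * e2 = e2 & e1 + e2 = 1] ->
  [/\ l1 != l2, l1 != 0, l2 != 0 & l1 + l2 != 0] ->
  (forall b : 'M[F]_2, b \in M <->
       exists (t : F) (x : 'M[F]_2), b = t *: (l1 *: e1 + l2 *: e2) + e1 * x * e2) ->
  IF M /\ (forall N, IF N -> (M <= N)%VS -> N = M).
Proof.
move=> [n1 n2 i1 i2 s12] [l12 nl1 nl2 ls] Hm.
have E2 : e2 = 1 - e1 by rewrite -s12 addrC addKr.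
have E1 : e1 = 1 - e2 by rewrite -s12 addrK.
have o12 : e1 * e2 = 0 by rewrite E2 mulrBr mulr1 i1 subrr.
have o21 : e2 * e1 = 0 by rewrite E2 mulrBl mul1r i1 subrr.
split.
  move=> z /Hm [t [y ->]]; apply: IF_ii => //.
move=> N HN MN; apply: subv_anti; rewrite MN andbT; apply/subvP => y yN.
set v := l1 *: e1 + l2 *: e2.
have vM : v \in M by apply/Hm; exists 1, 0; rewrite scale1r mulr0 mul0r addr0.
have tv : \tr v != 0.
  have ne1 : e1 != 1 by apply: contraNneq n2 => e1_1; rewrite E2 e1_1 subrr.
  have ne2 : e2 != 1 by apply: contraNneq n1 => e2_1; rewrite E1 e2_1 subrr.
  by rewrite mxtraceD !mxtraceZ !trE1 // !mulr1.
have [w nc] := nz_sand _ _ n1 n2.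
have cM : e1 * w * e2 \in M by apply/Hm; exists 0, w; rewrite scale0r add0r.
have tc : \tr (e1 * w * e2) = 0 by rewrite trC mulrA o21 mul0r mxtrace0.
have [t [s ->]] := span2 HN (subvP MN _ vM) tv (subvP MN _ cM) tc nc y yN.
apply/Hm; exists t, (s *: w).
by rewrite -[e1 * (s *: w)]scalerAr -[s *: (e1 * w) * e2]scalerAl.
Qed.

Lemma bwd3 (tw : (2%:R : F) != 0) M (c : 'M[F]_2) :
  c != 0 -> (exists k : nat, c ^+ k = 0) ->
  (forall b : 'M[F]_2, b \in M <-> exists t : F, b = t *: (1 + c)) ->
  IF M /\ (forall N, IF N -> (M <= N)%VS -> N = M).
Proof.
move=> nc [k ck] Hm.
have [tc dc] := nilp _ _ nc ck.
have cc := sqr0 _ tc dc.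
set x := 1 + c.
have xM : x \in M by apply/Hm; exists 1; rewrite scale1r.
have tx : \tr x = 2%:R by rewrite mxtraceD tc addr0 tr2_1.
have xx : x * x = x + c by rewrite /x mulrDl !mulrDr !mul1r mulr1 cc addr0.
split.
  move=> z /Hm [t ->]; rewrite sc_mul xx => E.
  have tt : t * t = t.
    have := congr1 (@mxtrace _ _) E; rewrite !mxtraceZ mxtraceD tc addr0 tx.
    by move/(mulIf tw).
  have [t0|tn0] := eqVneq t 0; first by rewrite t0 scale0r.
  have t1 : t = 1 by apply: (mulfI tn0); rewrite tt mulr1.
  move: E; rewrite t1 mulr1 !scale1r => /eqP; rewrite -subr_eq0 addrC addKr => /eqP c0.
  by move/eqP: nc.
move=> N HN MN; apply: subv_anti; rewrite MN andbT; apply/subvP => y yN.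
have xN := subvP MN _ xM.
have tx0 : \tr x != 0 by rewrite tx.
set kk := y - (\tr y / \tr x) *: x.
have kN : kk \in N by rewrite memvB // memvZ.
have tk : \tr kk = 0 by rewrite trB mxtraceZ divfK // subrr.
have [dk txk] := L1 HN xN tx0 kN tk.
have tck : \tr (c * kk) = 0.
  by move: txk; rewrite /x mulrDl mul1r mxtraceD tk add0r.
have [s ks] := L2 c kk nc tc dc tk dk tck.
have [s0|sn0] := eqVneq s 0.
  have -> : y = (\tr y / \tr x) *: x.
    by apply/eqP; rewrite -subr_eq0 -/kk ks s0 scale0r.
  by rewrite memvZ.
exfalso; apply: (not_one _ HN).
have cN : c \in N by have := memvZ s^-1 kN; rewrite ks scalerA mulVf // scale1r.
have -> : (1 : 'M[F]_2) = x - c by rewrite /x addrK.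
by rewrite memvB.
Qed.
End T.

Theorem theorem3p5 (F : closedFieldType) (hF : (2 \notin [pchar F])%N)
  (M : {vspace 'M[F]_2}) :
  maximal_mathieu_subspace M <->
  [\/ (* (i) trace-zero matrices *)
      (forall b : 'M[F]_2, b \in M = (\tr b == 0)),
      (* (ii) F(l1 e1 + l2 e2) + e1 M_2(F) e2 *)
      (exists (e1 e2 : 'M[F]_2) (l1 l2 : F),
         [/\ e1 != 0, e2 != 0, e1 * e1 = e1, e2 * e2 = e2 & e1 + e2 = 1] /\
         [/\ l1 != l2, l1 != 0, l2 != 0 & l1 + l2 != 0] /\
         (forall b : 'M[F]_2, b \in M <->
            exists (t : F) (x : 'M[F]_2),
              b = t *: (l1 *: e1 + l2 *: e2) + e1 * x * e2))
    | (* (iii) F(I_2 + c), c nonzero nilpotent *)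
      (exists c : 'M[F]_2,
         [/\ c != 0, (exists k : nat, c ^+ k = 0) &
             (forall b : 'M[F]_2, b \in M <-> exists t : F, b = t *: (1 + c))])].
Proof.
have tw := two F hF.
rewrite maxE; split; first by case; exact: fwd.
case=> [Hi|[e1 [e2 [l1 [l2 [H1 [H2 H3]]]]]]|[c [nc nk Hm]]].
- exact: bwd1.
- exact: bwd2 H1 H2 H3.
- exact: bwd3 nc nk Hm.
Qed.
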